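(* Assume $F$ is $K$-smooth with $\ell\in\mathrm{int}(K)$, let $e\in\mathrm{int}(K)$ and $\gamma\in(0,1)$. In Algorithm 6 (with arbitrary choices $e_k\in\mathrm{int}(K)$), every stepsize satisfies $$t_k\ge\min\Big\{\min_{c^*\in C_e}\frac{\gamma\langle c^*,e_k\rangle}{\langle c^*,\ell\rangle},\,1\Big\}.$$
   Context: $K\subset\mathbb{R}^m$ closed convex pointed cone with nonempty interior; $y\preceq_K y'$ iff $y'-y\in K$. $K^*=\{c:\langle c,y\rangle\ge0\ \forall y\in K\}$; $C_e:=\{c^*\in K^*:\langle c^*,e\rangle=1\}$. $F:\mathbb{R}^n\to\mathbb{R}^m$ differentiable with Jacobian $JF$; $K$-smooth with $\ell$: $F(y)-F(x)\preceq_K JF(x)(y-x)+\tfrac12\|y-x\|^2\ell$ $\forall x,y$. Algorithm 6 (generic first-order method): given $x^0$, $\gamma\in(0,1)$, for $k=0,1,\dots$: choose $e_k\in\mathrm{int}(K)$; $d^k:=\arg\min_d\max_{c^*\in C_e}\langle c^*,JF(x^k)d+\tfrac12\|d\|^2e_k\rangle$; if $d^k=0$ stop; otherwise $t_k:=\max\{\gamma^j:j\in\mathbb{N},\ F(x^k+\gamma^jd^k)-F(x^k)\preceq_K\gamma^j(JF(x^k)d^k+\tfrac12\|d^k\|^2e_k)\}$, $x^{k+1}:=x^k+t_kd^k$. *)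

(* Defs.v *)
From HB Require Import structures.
From mathcomp Require Import all_boot all_order all_algebra.
From mathcomp Require Import all_classical all_reals all_analysis.
Set Implicit Arguments. Unset Strict Implicit. Unset Printing Implicit Defensive.
Import Order.TTheory GRing.Theory Num.Theory.
Import numFieldNormedType.Exports.
Local Open Scope classical_set_scope.
Local Open Scope ring_scope.

Section Defs.
Variable R : realType.

Definition dotv (m : nat) (u v : 'rV[R]_m) : R := \sum_(i < m) u ord0 i * v ord0 i.
Definition sqn (m : nat) (d : 'rV[R]_m) : R := dotv d d.

Definition Kle (m : nat) (K : set 'rV[R]_m) (y y' : 'rV[R]_m) : Prop := K (y' - y).

Definition cone_set (m : nat) (K : set 'rV[R]_m) : Prop :=
  forall y a, K y -> 0 <= a -> K (a *: y).
Definition convex_cone_set (m : nat) (K : set 'rV[R]_m) : Prop :=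
  forall y z a, K y -> K z -> 0 <= a <= 1 -> K (a *: y + (1 - a) *: z).
Definition pointed (m : nat) (K : set 'rV[R]_m) : Prop :=
  forall y, K y -> K (- y) -> y = 0.

Definition dual_cone (m : nat) (K : set 'rV[R]_m) : set 'rV[R]_m :=
  [set c | forall y, K y -> 0 <= dotv c y].
Definition Cbase (m : nat) (K : set 'rV[R]_m) (e : 'rV[R]_m) : set 'rV[R]_m :=
  [set c | dual_cone K c /\ dotv c e = 1].

(* K-smoothness with constant l, Jacobian JF(x) = 'd F x *)
Definition Ksmooth (n m : nat) (K : set 'rV[R]_m) (F : 'rV[R]_n -> 'rV[R]_m)
    (l : 'rV[R]_m) : Prop :=
  forall x y, Kle K (F y - F x) ('d F x (y - x) + (2^-1 * sqn (y - x)) *: l).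

(* objective of the direction subproblem:
   d |-> max_{c in C_e} <c, JF(x) d + 1/2 ||d||^2 e_k> *)
Definition subobj (n m : nat) (K : set 'rV[R]_m) (e : 'rV[R]_m)
    (F : 'rV[R]_n -> 'rV[R]_m) (x : 'rV[R]_n) (ek : 'rV[R]_m) (d : 'rV[R]_n) : R :=
  sup [set dotv c ('d F x d + (2^-1 * sqn d) *: ek) | c in Cbase K e].

Definition is_argmin (n : nat) (phi : 'rV[R]_n -> R) (d : 'rV[R]_n) : Prop :=
  forall d', phi d <= phi d'.

Definition armijo_set (n m : nat) (K : set 'rV[R]_m) (F : 'rV[R]_n -> 'rV[R]_m)
    (gamma : R) (x d : 'rV[R]_n) (ek : 'rV[R]_m) : set R :=
  [set s | exists j : nat, s = gamma ^+ j /\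
     Kle K (F (x + s *: d) - F x) (s *: ('d F x d + (2^-1 * sqn d) *: ek))].

Definition is_max (A : set R) (t : R) : Prop := A t /\ forall s, A s -> s <= t.

End Defs.

(* Main.v *)
Require Import Defs.
From HB Require Import structures.
From mathcomp Require Import all_boot all_order all_algebra.
From mathcomp Require Import all_classical all_reals all_analysis.
From mathcomp Require Import ring lra.
Import Order.TTheory GRing.Theory Num.Theory.
Import numFieldNormedType.Exports.
Local Open Scope classical_set_scope.
Local Open Scope ring_scope.
Set Implicit Arguments. Unset Strict Implicit.


Section Aux.
Variable R : realType.
Variable m : nat.
Implicit Types u v w : 'rV[R]_m.

Lemma dotvC u v : dotv u v = dotv v u.
Proof. by apply: eq_bigr => i _; rewrite mulrC. Qed.

Lemma dotvDl u v w : dotv (u + v) w = dotv u w + dotv v w.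
Proof. by rewrite /dotv -big_split; apply: eq_bigr => i _; rewrite mxE mulrDl. Qed.

Lemma dotvZl a u v : dotv (a *: u) v = a * dotv u v.
Proof. by rewrite /dotv mulr_sumr; apply: eq_bigr => i _; rewrite mxE mulrA. Qed.

Lemma dotvNl u v : dotv (- u) v = - dotv u v.
Proof. by rewrite /dotv -sumrN; apply: eq_bigr => i _; rewrite mxE mulNr. Qed.

Lemma dotvDr u v w : dotv u (v + w) = dotv u v + dotv u w.
Proof. by rewrite dotvC dotvDl !(dotvC u). Qed.

Lemma dotvZr a u v : dotv u (a *: v) = a * dotv u v.
Proof. by rewrite dotvC dotvZl dotvC. Qed.

Lemma dotvNr u v : dotv u (- v) = - dotv u v.
Proof. by rewrite dotvC dotvNl dotvC. Qed.

Lemma dotv0l v : dotv 0 v = 0.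
Proof. by rewrite /dotv big1 // => i _; rewrite mxE mul0r. Qed.

Lemma sqn_ge0 u : 0 <= sqn u.
Proof. by apply: sumr_ge0 => i _; rewrite -expr2 sqr_ge0. Qed.

Lemma coord_le_sqn u i : u ord0 i ^+ 2 <= sqn u.
Proof.
rewrite /sqn /dotv (bigD1 i) //= expr2 lerDl.
by apply: sumr_ge0 => j _; rewrite -expr2 sqr_ge0.
Qed.


Lemma sqn_gt0 u : u != 0 -> 0 < sqn u.
Proof.
move=> u0; have [i ui] : exists i, u ord0 i != 0.
  apply/existsP; apply: contraNT u0; rewrite negb_exists => /forallP H.
  apply/eqP/rowP => i; rewrite mxE; apply/eqP; have := H i; by rewrite negbK.
apply: lt_le_trans (coord_le_sqn u i).
by rewrite lt0r sqr_ge0 andbT expf_neq0.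
Qed.

Lemma sqnBZ u v t : sqn (u - t *: v) = sqn u - 2 * t * dotv u v + t ^+ 2 * sqn v.
Proof.
rewrite /sqn !(dotvDl, dotvDr, dotvNl, dotvNr, dotvZl, dotvZr) (dotvC v u).
ring.
Qed.

Lemma sqnZ a u : sqn (a *: u) = a ^+ 2 * sqn u.
Proof. by rewrite /sqn dotvZl dotvZr; ring. Qed.

Lemma aux_lim (a b : R) : 0 <= b ->
  (forall t, 0 < t -> t <= 1 -> 0 <= a + t * b) -> 0 <= a.
Proof.
move=> b0 H; rewrite leNgt; apply/negP => a0.
have b1 : 0 < b + 1 by lra.
case: (lerP (- a / (b + 1)) 1) => h.
- have t0 : 0 < - a / (b + 1) by rewrite divr_gt0 // oppr_gt0.
  have := H _ t0 h.
  have e : - a / (b + 1) * (b + 1) = - a by rewrite divfK // gt_eqF.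
  set t := - a / (b + 1) in e t0 *; lra.
- rewrite ltr_pdivlMr // mul1r in h.
  have := H 1 ltr01 (lexx _); lra.
Qed.

End Aux.

Section Sep.
Variable R : realType.
Variable m : nat.

Lemma Kadd (K : set 'rV[R]_m) y w : convex_cone_set K -> cone_set K ->
  K y -> K w -> K (y + w).
Proof.
move=> cv cn Ky Kw.
have h : ((0:R) <= 2^-1) && (2^-1 <= (1:R)) by apply/andP; split; lra.
have h2 : (0 : R) <= 2 by lra.
have := cn _ 2 (cv _ _ _ Ky Kw h) h2.
have -> : 1 - 2^-1 = 2^-1 :> R by field.
by rewrite scalerDr !scalerA mulfV ?scale1r // pnatr_eq0.
Qed.

Lemma sum_cont (f : 'I_m -> 'rV[R]_m -> R) :
  (forall i, continuous (f i)) -> continuous (fun y => \sum_i f i y).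
Proof.
move=> fc.
suff H : forall r : seq 'I_m, continuous (fun y => \sum_(i <- r) f i y) by apply: H.
elim => [|i r IH] y.
  have -> : (fun y => \sum_(i <- [::]) f i y) = fun=> 0.
    by apply: funext => z; rewrite big_nil.
  exact: cst_continuous.
have -> : (fun y => \sum_(j <- i :: r) f j y) = fun y => f i y + \sum_(j <- r) f j y.
  by apply: funext => z; rewrite big_cons.
exact: (cvgD (fc i y) (IH y)).
Qed.

Lemma sqn_cont (z : 'rV[R]_m) : continuous (fun y : 'rV[R]_m => sqn (z - y)).
Proof.
have e : (fun y : 'rV[R]_m => sqn (z - y)) =
    (fun y : 'rV[R]_m => \sum_i (z ord0 i - y ord0 i) * (z ord0 i - y ord0 i)).
  by apply/funext => y; rewrite /sqn /dotv; apply: eq_bigr => i _; rewrite !mxE.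
rewrite e; apply: sum_cont => i y.
have c : (fun y0 : 'rV[R]_m => z ord0 i - y0 ord0 i) @ y --> z ord0 i - y ord0 i.
  exact: (cvgB (cvg_cst (z ord0 i)) (@coord_continuous R 1 m ord0 i y)).
exact: (cvgM c c).
Qed.

End Sep.

Section Sep2.
Variable R : realType.
Variable m : nat.

Lemma abs_le1sq (a : R) : `|a| <= 1 + a ^+ 2.
Proof.
rewrite -real_normK ?num_real //.
have := normr_ge0 a; set b := `|a|; nra.
Qed.

Lemma sep (K : set 'rV[R]_m) (z : 'rV[R]_m) : closed K -> convex_cone_set K ->
  cone_set K -> K 0 -> ~ K z -> exists c, dual_cone K c /\ dotv c z < 0.
Proof.
move=> Kcl cv cn K0 Kz.
pose phi := fun y : 'rV[R]_m => sqn (z - y).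
pose A := K `&` [set y | phi y <= sqn z].
have phic : continuous phi := @sqn_cont R m z.
have Acl : closed A.
  apply: closedI => //.
  exact: ((continuous_closedP phi).1 phic _ (@closed_le _ (sqn z))).
have Abd : bounded_set A.
  exists (2 + 2 * sqn z); split; first exact: num_real.
  move=> M BM y [_ Ay].
  rewrite /=; have -> : `|y| = mx_norm y by [].
  rewrite mx_normrE; apply/bigmax_leP; split => [|ij _]; first by have := sqn_ge0 z; lra.
  have -> : ij.1 = ord0 by apply: ord1.
  set j := ij.2.
  have h1 := coord_le_sqn (z - y) j.
  have h2 := coord_le_sqn z j.
  rewrite !mxE in h1.
  have h3 := abs_le1sq (z ord0 j - y ord0 j).
  have h4 := abs_le1sq (z ord0 j).
  have h5 : `|y ord0 j| <= `|z ord0 j - y ord0 j| + `|z ord0 j|.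
    have e : y ord0 j = - (z ord0 j - y ord0 j) + z ord0 j by ring.
    by rewrite {1}e (le_trans (ler_normD _ _)) // normrN.
  rewrite /phi /= in Ay.
  lra.
have Acp : compact A := bounded_closed_compact Abd Acl.
have A0 : A !=set0.
  by exists 0; split => //; rewrite /phi /= subr0.
have [p pA pmin] := compact_EVT_min A0 Acp (continuous_subspaceT phic).
move: pA; rewrite inE => -[Kp _].
have pminK : forall y, K y -> phi p <= phi y.
  move=> y Ky; case: (lerP (phi y) (sqn z)) => h.
    by apply: pmin; rewrite inE.
  apply: le_trans (ltW h).
  have := pmin 0; rewrite /phi subr0; apply; rewrite inE; split => //=. by rewrite /phi subr0.
pose w := z - p.
have key : forall v, (forall t, 0 < t -> t <= 1 -> K (p + t *: v)) ->
    dotv w v <= 0.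
  move=> v Hv.
  suff : 0 <= - (2 * dotv w v) by lra.
  apply: (aux_lim (sqn_ge0 v)) => t t0 t1.
  have := pminK _ (Hv t t0 t1).
  rewrite /phi opprD addrA -/w sqnBZ.
  nra.
have wy : forall y, K y -> dotv w y <= 0.
  move=> y Ky; apply: key => t t0 _.
  by apply: Kadd => //; apply: cn => //; exact: ltW.
have wp1 : dotv w p <= 0 by apply: wy.
have wp2 : dotv w (- p) <= 0.
  apply: key => t t0 t1.
  have -> : p + t *: - p = (1 - t) *: p.
    by rewrite scalerBl scale1r scalerN.
  by apply: cn => //; lra.
rewrite dotvNr in wp2.
have w0 : w != 0.
  apply/eqP => w0; apply: Kz.
  by have -> : z = p by apply/eqP; rewrite -subr_eq0 -/w w0.
exists (- w); split.
  by move=> y Ky; rewrite dotvNl; have := wy y Ky; lra.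
have -> : z = w + p by rewrite /w subrK.
rewrite dotvNl dotvDr.
have := sqn_gt0 w0; rewrite /sqn; lra.
Qed.

End Sep2.

Section Pos.
Variable R : realType.
Variable m : nat.

Lemma dual_pos (K : set 'rV[R]_m) c v : dual_cone K c -> c != 0 -> K° v ->
  0 < dotv c v.
Proof.
move=> dc c0 /nbhs_ballP [r r0 Hr].
have n0 := normr_ge0 c.
pose dl := r / (2 * (`|c| + 1)).
have dl0 : 0 < dl by rewrite divr_gt0 //; lra.
have hb : ball v r (v - dl *: c).
  rewrite -ball_normE /= opprB addrC subrK normrZ gtr0_norm //.
  rewrite /dl mulrAC ltr_pdivrMr; last lra.
  have r0' : 0 < r := r0. nra.
have := dc _ (Hr _ hb).
rewrite dotvDr dotvNr dotvZr.
have := sqn_gt0 c0; rewrite /sqn => h.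
nra.
Qed.

End Pos.

Unset Implicit Arguments.

Theorem mainTheorem12 (R : realType) (n m : nat) (K : set 'rV[R]_m)
  (F : 'rV[R]_n -> 'rV[R]_m) (l e : 'rV[R]_m) (gamma : R)
  (x : nat -> 'rV[R]_n) (ek : nat -> 'rV[R]_m) (d : nat -> 'rV[R]_n) (t : nat -> R) :
  closed K -> convex_cone_set K -> cone_set K -> pointed K -> K° !=set0 ->
  (forall z, differentiable F z) -> Ksmooth K F l ->
  K° l -> K° e -> 0 < gamma < 1 ->
  (forall k, K° (ek k)) ->
  (forall k, is_argmin (subobj K e F (x k) (ek k)) (d k)) ->
  (forall k, d k != 0 ->
     is_max (armijo_set K F gamma (x k) (d k) (ek k)) (t k) /\
     x k.+1 = x k + t k *: d k) ->
  forall k, (forall i, (i <= k)%N -> d i != 0) ->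
    Num.min (inf [set gamma * dotv c (ek k) / dotv c l | c in Cbase K e]) 1 <= t k.
Proof.
move=> Kcl cv cn _ [y0 Ky0] _ Ksm Kl Ke /andP[g0 g1] Kek _ Harm k Hd.
have Ky0' : K y0 := interior_subset Ky0.
have K0 : K 0 by rewrite -(scale0r y0); apply: cn.
have [[[j [tj Hj]] tmax] _] := Harm k (Hd k (leqnn k)).
case: j tj Hj => [|j] tj Hj.
  by rewrite tj expr0 ge_min lexx orbT.
pose s := gamma ^+ j.
have s0 : 0 < s by rewrite exprn_gt0.
have ts : t k = gamma * s by rewrite tj exprS.
have nA : ~ armijo_set K F gamma (x k) (d k) (ek k) s.
  move=> /tmax; rewrite ts => h.
  have : gamma * s < s by rewrite gtr_pMl.
  by rewrite ltNge h.
pose z := ek k - s *: l.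
have nKz : ~ K z.
  move=> Kz; apply: nA; exists j; split => //.
  rewrite /Kle.
  pose h := 2^-1 * sqn (d k).
  have Hs := Ksm (x k) (x k + s *: d k).
  rewrite /Kle in Hs.
  rewrite (_ : x k + s *: d k - x k = s *: d k) in Hs; last by rewrite addrC addKr.
  rewrite linearZ /= sqnZ in Hs.
  have h0 : 0 <= h by rewrite /h mulr_ge0 ?sqn_ge0 // invr_ge0.
  have Kz' : K ((s * h) *: z) by apply: cn => //; rewrite mulr_ge0 // ltW.
  have := Kadd cv cn Hs Kz'.
  set lhs := (_ + _); set rhs := (_ - _).
  suff -> : rhs = lhs by [].
  rewrite /lhs /rhs /z /h; apply/rowP => i; rewrite !mxE; ring.
have [c [dc cz]] := sep Kcl cv cn K0 nKz.
have c0 : c != 0.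
  by apply: contraTneq cz => ->; rewrite dotv0l ltxx.
have ce := dual_pos dc c0 Ke.
have cl := dual_pos dc c0 Kl.
have cek := dual_pos dc c0 (Kek k).
rewrite /z dotvDr dotvNr dotvZr in cz.
pose c' := (dotv c e)^-1 *: c.
have Cc' : Cbase K e c'.
  split.
    move=> y Ky; rewrite dotvZl mulr_ge0 //; first by rewrite invr_ge0 ltW.
    exact: dc.
  by rewrite dotvZl mulVf // gt_eqF.
have lbS : has_lbound [set gamma * dotv c (ek k) / dotv c l | c in Cbase K e].
  exists 0 => _ [c'' [dc'' ce''] <-].
  have c''0 : c'' != 0.
    apply/eqP => h0; move: ce''; rewrite h0 dotv0l => /eqP; by rewrite eq_sym oner_eq0.
  have := dual_pos dc'' c''0 Kl; have := dual_pos dc'' c''0 (Kek k).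
  move=> h1 h2; rewrite divr_ge0 // ?mulr_ge0 // ?ltW //.
have hinf := ge_inf lbS (ex_intro2 _ _ c' Cc' erefl).
rewrite ge_min; apply/orP; left.
apply: le_trans hinf _.
rewrite /c' !dotvZl ts.
have ie : 0 < (dotv c e)^-1 by rewrite invr_gt0.
have -> : gamma * ((dotv c e)^-1 * dotv c (ek k)) / ((dotv c e)^-1 * dotv c l)
    = gamma * (dotv c (ek k) / dotv c l).
  by field; apply/andP; split; rewrite gt_eqF.
rewrite ler_pM2l // ler_pdivrMr //.
by rewrite mulrC; lra.
Qed.
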